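(* Let $p$ be a prime number and let $A=\{1,p,p^2,p^3,\dots\}$. For every positive integer $n$, $$N^p_A(n)=\sum_{k=0}^{n-1}p_A(k)\big(\vartheta_p(n-k)+1\big).$$
   Context: For a set $A$ of positive integers, $N^p_A(n)$ is the total number of parts, summed over all partitions of $n$ with all parts in $A$, and $p_A(n)$ is the number of partitions of $n$ with parts in $A$, with $p_A(0)=1$. $\vartheta_p(m)$ is the $p$-adic valuation of $m$, i.e. the exponent of $p$ in $m$. *)

(* Defs.v *)
From mathcomp Require Import all_boot.
Set Implicit Arguments. Unset Strict Implicit. Unset Printing Implicit Defensive.

Definition is_partition (n : nat) (s : seq nat) : bool :=
  [&& sorted geq s, all (fun x => 0 < x) s & sumn s == n].

Fixpoint parts_le (fuel n m : nat) : seq (seq nat) :=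
  match fuel with
  | 0 => if n == 0 then [:: [::]] else [::]
  | fuel'.+1 =>
      if n == 0 then [:: [::]] else
      flatten [seq [seq k :: s | s <- parts_le fuel' (n - k) k]
              | k <- iota 1 (minn m n)]
  end.

Definition partitions (n : nat) : seq (seq nat) := parts_le n n n.

Definition powp (p m : nat) : bool := has (fun k => p ^ k == m) (iota 0 m.+1).

Definition partsA (p n : nat) : seq (seq nat) :=
  [seq s <- partitions n | all (powp p) s].

Definition pA (p n : nat) : nat := size (partsA p n).

Definition NA (p n : nat) : nat := sumn [seq size s | s <- partsA p n].

Lemma partitions_5 : size (partitions 5) = 7. Proof. by []. Qed.
Lemma partitions_spec_5 :
  all (is_partition 5) (partitions 5) && uniq (partitions 5). Proof. by []. Qed.
Lemma pA_2_4 : pA 2 4 = 4. Proof. by vm_compute. Qed.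
Lemma NA_2_4 : NA 2 4 = 10. Proof. by vm_compute. Qed.

(* Main.v *)
Require Import Defs.
From mathcomp Require Import all_boot zify.

Lemma geq_trans : transitive geq.
Proof. by move=> x y z /= h1 h2; apply: leq_trans h2 h1. Qed.

Lemma parts_le_mem fuel n m s : n <= fuel ->
  (s \in parts_le fuel n m) =
  [&& sorted geq s, all (fun x => 0 < x) s, sumn s == n & all (fun x => x <= m) s].
Proof.
elim: fuel n m s => [|f IH] n m s hn.
  have -> : n = 0 by lia.
  rewrite /= inE; case: s => [|x s] //=.
  by case: x => [|x] /=; rewrite ?andbF.
case: (posnP n) => [->|n0].
  rewrite /= inE; case: s => [|x s] //=.
  by case: x => [|x] /=; rewrite ?andbF.
have -> : parts_le f.+1 n m =
  [seq k :: t | k <- iota 1 (minn m n), t <- parts_le f (n - k) k].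
  by rewrite /=; case: eqP => //; lia.
apply/allpairsPdep/idP.
  move=> [k [t [hk ht ->]]].
  rewrite mem_iota in hk.
  rewrite IH in ht; last by lia.
  move/and4P: ht => [h1 h2 h3 h4].
  rewrite /= (path_sortedE geq_trans) h1 h2 /=.
  move/eqP: h3 => h3.
  apply/and5P; split.
  - by rewrite andbT.
  - by rewrite andbT; lia.
  - by apply/eqP; lia.
  - by lia.
  - by apply/allP => y /(allP h4) /=; lia.
case: s => [|x t]; first by rewrite /= => /eqP; lia.
rewrite /= (path_sortedE geq_trans) => /and4P [/andP [hx1 hx2] /andP [hx3 hx4] hx5 /andP [hx6 hx7]].
exists x, t; split => //.
  by rewrite mem_iota; lia.
rewrite IH; last by lia.
apply/and4P; split => //; first by lia.
Qed.

Lemma parts_le_uniq fuel n m : uniq (parts_le fuel n m).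
Proof.
elim: fuel n m => [|f IH] n m /=; first by case: (n == 0).
case: (n == 0) => //.
apply: (@allpairs_uniq_dep _ (fun _ => _) _ (fun k t => k :: t)).
- exact: iota_uniq.
- by move=> k _; apply: IH.
- by move=> [a u] [b v] _ _ /= [-> ->].
Qed.

Lemma geq_anti : antisymmetric geq.
Proof. by move=> x y /andP [h1 h2]; apply/eqP; rewrite eqn_leq; apply/andP. Qed.

Lemma geq_tot : total geq.
Proof. by move=> x y; rewrite /= orbC leq_total. Qed.

Lemma mem_le_sumn (s : seq nat) x : x \in s -> x <= sumn s.
Proof.
elim: s => [|y s IH] //=; rewrite inE => /orP [/eqP ->|/IH]; lia.
Qed.

Lemma partsA_mem p n s : (s \in partsA p n) =
  [&& sorted geq s, all (fun x => 0 < x) s, sumn s == n & all (powp p) s].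
Proof.
rewrite /partsA mem_filter /partitions parts_le_mem //.
apply/idP/idP.
  by move=> /andP [h /and4P [-> -> -> _]].
move=> /and4P [h1 h2 h3 h4]; rewrite h1 h2 h3 h4 /=.
by apply/allP => x /mem_le_sumn; move/eqP: h3 => ->.
Qed.

Lemma partsA_uniq p n : uniq (partsA p n).
Proof. exact/filter_uniq/parts_le_uniq. Qed.

Lemma powpP p x : powp p x -> exists2 k, x = p ^ k & k <= x.
Proof.
move=> /hasP [k]; rewrite mem_iota => /andP [_ hk] /eqP hx; exists k => //; lia.
Qed.

Lemma powp_exp p k : 1 < p -> powp p (p ^ k).
Proof.
move=> hp; apply/hasP; exists k => //.
by rewrite mem_iota /= ltnS ltnW // ltn_expl.
Qed.

Lemma sum_bool (T : Type) (r : seq T) (P : pred T) :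
  \sum_(i <- r) (P i : nat) = count P r.
Proof.
rewrite -sum1_count [RHS]big_mkcond /=; apply: eq_bigr => i _; by case: (P i).
Qed.

Lemma sum_pick (r : seq nat) x (F : nat -> nat) : uniq r -> x \in r ->
  \sum_(i <- r) (i == x) * F i = F x.
Proof.
move=> u xr; rewrite (bigD1_seq x) //= eqxx mul1n big1 ?addn0 //.
by move=> i /negbTE ->.
Qed.

Lemma size_le_sumn (s : seq nat) : all (fun x => 0 < x) s -> size s <= sumn s.
Proof. elim: s => [|x s IH] //= /andP [h1 /IH]; lia. Qed.

Lemma count_mul_le (s : seq nat) a : count_mem a s * a <= sumn s.
Proof.
elim: s => [|x s IH] //=; case: (x =P a) => [->|_] /=; rewrite mulnDl ?mul1n ?mul0n ?add0n ?leq_add2l //; exact: leq_trans IH (leq_addl _ _).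
Qed.

Lemma size_count p n s : 1 < p -> s \in partsA p n ->
  size s = \sum_(i < n.+1) count_mem (p ^ i) s.
Proof.
move=> hp; rewrite partsA_mem => /and4P [_ _ /eqP hs hpow].
rewrite -sum1_size.
transitivity (\sum_(x <- s) \sum_(i < n.+1) (x == p ^ i : nat)).
  rewrite big_seq [RHS]big_seq; apply: eq_bigr => x xs.
  have [k hk hkx] := @powpP p x (allP hpow x xs).
  have kn : k < n.+1 by rewrite ltnS (leq_trans hkx) // -hs mem_le_sumn.
  rewrite (bigD1 (Ordinal kn)) //= hk eqxx big1 // => i /= hi.
  by rewrite eqn_exp2l // eq_sym; move: hi; rewrite -val_eqE /= => /negbTE ->.
rewrite exchange_big; apply: eq_bigr => i _.
by rewrite sum_bool.
Qed.

Lemma sum_lt_min c n : \sum_(0 <= d < n) (d < c : nat) = minn c n.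
Proof.
elim: n => [|n IH]; first by rewrite big_geq // minn0.
rewrite big_nat_recr //= IH; case: ltnP; lia.
Qed.

Lemma sum_D n k a : 0 < a -> k < n ->
  \sum_(0 <= d < n) (n - k == d.+1 * a : nat) = (a %| n - k).
Proof.
move=> a0 kn; case: (boolP (a %| n - k)) => [/dvdnP [q hq]|nd].
  have q0 : 0 < q by move: hq; case: q => [|q] //=; lia.
  have qn : q <= n - k by rewrite hq leq_pmulr.
  transitivity (\sum_(d <- index_iota 0 n) (d == q.-1) * 1).
    apply: eq_bigr => d _; rewrite hq eqn_mul2r eqn0Ngt a0 /= muln1.
    by congr nat_of_bool; apply/eqP/eqP; lia.
  rewrite sum_pick //; first by rewrite /index_iota iota_uniq.
  by rewrite mem_index_iota; lia.
rewrite big1 // => d _; case: eqP => // h; move: nd; rewrite h dvdn_mull //.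
Qed.

Lemma sum_E n D a (F : nat -> nat) : 0 < D * a ->
  (if D * a <= n then F (n - D * a) else 0) =
  \sum_(0 <= k < n) (n - k == D * a) * F k.
Proof.
move=> Da; case: ifP => h.
  transitivity (\sum_(k <- index_iota 0 n) (k == n - D * a) * F k).
    by rewrite sum_pick // ?mem_index_iota /index_iota ?iota_uniq //; lia.
  rewrite big_seq [RHS]big_seq; apply: eq_bigr => k; rewrite mem_index_iota => hk.
  by congr (nat_of_bool _ * _); apply/eqP/eqP; lia.
rewrite big1 // => k _; case: eqP => //; lia.
Qed.

Lemma sum_F p n m : prime p -> 0 < m -> m <= n ->
  \sum_(i < n.+1) (p ^ i %| m : nat) = logn p m + 1.
Proof.
move=> hp m0 mn.
have hl : logn p m < n.+1.
  have := dvdn_leq m0 (pfactor_dvdnn p m).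
  have := ltn_expl (logn p m) (prime_gt1 hp); lia.
transitivity (\sum_(i < n.+1) (i < (logn p m).+1 : nat)).
  by apply: eq_bigr => i _; rewrite pfactor_dvdn.
rewrite -(big_mkord xpredT (fun i => (i < (logn p m).+1 : nat))) sum_lt_min; lia.
Qed.

Definition ins (D a : nat) (t : seq nat) := sort geq (nseq D a ++ t).

Lemma perm_ins D a t : perm_eq (ins D a t) (nseq D a ++ t).
Proof. exact: (permEl (perm_sort _ _)). Qed.

Lemma filter_pred1_nseq (s : seq nat) a :
  [seq x <- s | x == a] = nseq (count_mem a s) a.
Proof.
elim: s => [|x s IH] //=; case: (x =P a) => [->|_] /=; by rewrite IH.
Qed.

Lemma count_C p n a d : 1 < p -> powp p a -> 0 < a ->
  count (fun s => d < count_mem a s) (partsA p n) =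
  if d.+1 * a <= n then pA p (n - d.+1 * a) else 0.
Proof.
move=> hp hpa a0; set D := d.+1.
case: ifP => hD; last first.
  rewrite (@eq_in_count _ _ pred0) ?count_pred0 // => s.
  rewrite partsA_mem => /and4P [_ _ /eqP hs _] /=.
  apply/negbTE; rewrite -leqNgt.
  have := count_mul_le s a; rewrite hs => h.
  apply: contraFT hD; rewrite -ltnNge => h2.
  apply: leq_trans h; rewrite leq_mul2r; apply/orP; right; exact: h2.
rewrite -size_filter /pA.
rewrite -(size_map (ins D a)).
apply/perm_size/uniq_perm.
- exact/filter_uniq/partsA_uniq.
- rewrite map_inj_in_uniq ?partsA_uniq // => t1 t2.
  rewrite !partsA_mem => /and4P [s1 _ _ _] /and4P [s2 _ _ _] h.
  have : perm_eq (nseq D a ++ t1) (nseq D a ++ t2).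
    apply: perm_trans (perm_ins D a t2).
    rewrite -h perm_sym; exact: perm_ins.
  rewrite perm_cat2l => hp12.
  exact: (sorted_eq geq_trans geq_anti).
move=> s; rewrite mem_filter; apply/andP/mapP.
  move=> [hc hs].
  set c := count_mem a s.
  set t := sort geq (nseq (c - D) a ++ [seq x <- s | x != a]).
  move: (hs); rewrite partsA_mem => /and4P [ss sp /eqP ssum spow].
  have hperm : perm_eq (nseq D a ++ t) s.
    apply: (@perm_trans _ (nseq D a ++ (nseq (c - D) a ++ [seq x <- s | x != a]))).
      by rewrite perm_cat2l; exact: (permEl (perm_sort _ _)).
    rewrite catA -nseqD subnKC //.
    rewrite -filter_pred1_nseq.
    exact: (permEl (perm_filterC (fun x => x == a) s)).
  exists t; last first.
    apply/esym/(sorted_eq geq_trans geq_anti) => //.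
      exact: (sort_sorted geq_tot).
    exact: perm_trans (perm_ins D a t) hperm.
  have hsum := perm_sumn hperm.
  rewrite sumn_cat !sumn_nseq ssum in hsum.
  have tperm : perm_eq t (nseq (c - D) a ++ [seq x <- s | x != a]).
    exact: (permEl (perm_sort _ _)).
  rewrite partsA_mem; apply/and4P; split.
  - exact: (sort_sorted geq_tot).
  - rewrite (perm_all _ tperm) all_cat; apply/andP; split.
      by apply/allP => x /nseqP [->].
    by apply/allP => x; rewrite mem_filter => /andP [_ /(allP sp)].
  - apply/eqP; lia.
  - rewrite (perm_all _ tperm) all_cat; apply/andP; split.
      by apply/allP => x /nseqP [->].
    by apply/allP => x; rewrite mem_filter => /andP [_ /(allP spow)].
move=> [t ht ->].
have hperm := perm_ins D a t.
move: ht; rewrite !partsA_mem => /and4P [ts tp /eqP tsum tpow].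
have -> : count_mem a (ins D a t) = D + count_mem a t.
  by rewrite ((permP hperm) (pred1 a)) count_cat count_nseq /= eqxx mul1n.
split; first lia.
apply/and4P; split.
- exact: (sort_sorted geq_tot).
- rewrite (perm_all _ hperm) all_cat tp andbT.
  by apply/allP => x /nseqP [->].
- by rewrite (perm_sumn hperm) sumn_cat sumn_nseq tsum; apply/eqP; lia.
- rewrite (perm_all _ hperm) all_cat tpow andbT.
  by apply/allP => x /nseqP [->].
Qed.

Theorem corollary3 (p n : nat) (hp : prime p) (hn : 0 < n) :
  NA p n = \sum_(0 <= k < n) pA p k * (logn p (n - k) + 1).
Proof.
have p1 := prime_gt1 hp.
set L := partsA p n.
have a0 i : 0 < p ^ i by rewrite expn_gt0 ltnW.
transitivity (\sum_(s <- L) \sum_(i < n.+1) \sum_(0 <= d < n) (d < count_mem (p ^ i) s : nat)).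
  rewrite /NA sumnE big_map big_seq [RHS]big_seq; apply: eq_bigr => s hs.
  rewrite (@size_count p n s p1 hs); apply: eq_bigr => i _.
  rewrite sum_lt_min; apply/esym/minn_idPl.
  move: hs; rewrite partsA_mem => /and4P [_ sp /eqP ssum _].
  exact: leq_trans (count_size _ s) (leq_trans (size_le_sumn s sp) (eq_leq ssum)).
rewrite exchange_big.
under eq_bigr => i _ do rewrite exchange_big.
transitivity (\sum_(i < n.+1) \sum_(0 <= d < n) \sum_(0 <= k < n)
               (n - k == d.+1 * p ^ i) * pA p k).
  apply: eq_bigr => i _; apply: eq_bigr => d _.
  rewrite sum_bool (@count_C p n (p ^ i) d p1 (powp_exp p i p1) (a0 i)).
  apply: sum_E; rewrite muln_gt0 a0.
  done.
transitivity (\sum_(i < n.+1) \sum_(0 <= k < n) \sum_(0 <= d < n)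
               (n - k == d.+1 * p ^ i) * pA p k).
  by apply: eq_bigr => i _; rewrite exchange_big.
rewrite exchange_big /=.
rewrite big_seq [RHS]big_seq; apply: eq_bigr => k; rewrite mem_index_iota => hk.
transitivity ((\sum_(i < n.+1) \sum_(0 <= d < n) (n - k == d.+1 * p ^ i : nat)) * pA p k).
  by rewrite big_distrl; apply: eq_bigr => i _; rewrite big_distrl.
rewrite mulnC; congr (_ * _).
transitivity (\sum_(i < n.+1) (p ^ i %| n - k : nat)).
  by apply: eq_bigr => i _; rewrite sum_D.
apply: sum_F => //; lia.
Qed.
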